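(* Consider the sequences $(x_k),(y_k),(\nu_k),(\lambda_k)$ generated by Algorithm 2 (described in the context). Then: (a) for all $k\ge1$, $\ \frac{\lambda_kL}{2}\big\|\lambda_k(F(y_{k-1})+\nu_{k-1})+y_{k-1}-x_{k-1}\big\|\le\theta$; (b) for all $k\ge1$, $\ \frac{\lambda_kL}{2}\big\|\lambda_k(F(y_k)+\nu_k)+y_k-x_{k-1}\big\|\le\hat\theta$.
   Context: Setting: $\mathcal H$ real Hilbert space; $C\subseteq\mathcal H$ nonempty closed convex; $N_C(x)=\{\nu:\langle\nu,y-x\rangle\le0\ \forall y\in C\}$ if $x\in C$, $N_C(x)=\emptyset$ otherwise. $F:C\to\mathcal H$ is monotone, continuously differentiable, and $\|F'(x)-F'(y)\|\le L\|x-y\|$ for all $x,y\in C$, with $L>0$; the set of $x$ with $0\in F(x)+N_C(x)$ is nonempty. For $y\in C$, $F_y(x):=F(y)+F'(y)(x-y)$. Parameters: $0\le\hat\sigma<1/2$; $0<\theta<(1-\hat\sigma)(1-2\hat\sigma)$; $\hat\theta:=\theta\big(\frac{\hat\sigma}{1-\hat\sigma}+\frac{\theta}{(1-\hat\sigma)^2}\big)$; $\eta>2\hat\theta/L$; $\tau:=\dfrac{2(\theta-\hat\theta)}{2\theta+\frac{\eta L}{2}+\sqrt{(2\theta+\frac{\eta L}{2})^2-4\theta(\theta-\hat\theta)}}$. Algorithm 2: input $x_0\in C$, $y_0:=x_0$, $\nu_0:=0$, $\lambda_1>0$ with $\lambda_1^2\|F(y_0)\|\le2\theta/L$. For $k=1,2,\dots$: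 if $F(y_{k-1})+\nu_{k-1}=0$, stop and return $y_{k-1}$. If $\frac{\lambda_kL}{2}\|\lambda_k(F(y_{k-1})+\nu_{k-1})+y_{k-1}-x_{k-1}\|\le\hat\theta$, set $y_k=y_{k-1}$, $\nu_k=\nu_{k-1}$; otherwise find any $(y_k,\nu_k)$ with $\nu_k\in N_C(y_k)$ and $\|\lambda_k(F_{y_{k-1}}(y_k)+\nu_k)+y_k-x_{k-1}\|\le\hat\sigma\|y_k-y_{k-1}\|$. Then, if $\lambda_k\|y_k-x_{k-1}\|\ge\eta$, set $x_k=x_{k-1}-\tau\lambda_k(F(y_k)+\nu_k)$ and $\lambda_{k+1}=(1-\tau)\lambda_k$; else set $x_k=x_{k-1}$ and $\lambda_{k+1}=\lambda_k/(1-\tau)$. Standing assumption: the algorithm never stops at the first test, i.e. $F(y_{k-1})+\nu_{k-1}\neq0$ for all $k$. *)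

(* Defs.v *)
From mathcomp Require Import all_boot all_order all_algebra.
From mathcomp Require Import all_classical all_reals all_analysis.
Set Implicit Arguments. Unset Strict Implicit. Unset Printing Implicit Defensive.
Import Order.TTheory GRing.Theory Num.Theory.
Import numFieldNormedType.Exports.
Local Open Scope classical_set_scope.
Local Open Scope ring_scope.

(* [ip] is an inner product on the normed space V inducing its norm:
   symmetric, linear in the first argument, and <x,x> = |x|^2.
   Together with completeness of V this makes V a real Hilbert space. *)
Definition is_inner_product {R : realType} {V : normedModType R}
  (ip : V -> V -> R) : Prop :=
  [/\ forall x y, ip x y = ip y x,
      forall a x y z, ip (a *: x + y) z = a * ip x z + ip y z
    & forall x, ip x x = `|x| ^+ 2].

Definition normal_cone {R : realType} {V : normedModType R}
  (ip : V -> V -> R) (C : set V) (x : V) : set V :=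
  [set nu | C x /\ forall y, C y -> ip nu (y - x) <= 0].

Definition monotone_on {R : realType} {V : normedModType R}
  (ip : V -> V -> R) (C : set V) (F : V -> V) : Prop :=
  forall x y, C x -> C y -> 0 <= ip (F x - F y) (x - y).

Definition frechet_deriv_on {R : realType} {V : normedModType R}
  (C : set V) (F : V -> V) (F' : V -> V -> V) : Prop :=
  forall x, C x ->
    [/\ forall (a : R) u v, F' x (a *: u + v) = a *: F' x u + F' x v,
        exists M : R, forall v, `|F' x v| <= M * `|v|
      & forall eps : R, 0 < eps -> exists2 delta : R, 0 < delta &
          forall y, C y -> `|y - x| < delta ->
            `|F y - F x - F' x (y - x)| <= eps * `|y - x| ].

(* ||F'(x) - F'(y)|| <= L ||x - y|| in operator norm, written out. *)
Definition deriv_lipschitz_on {R : realType} {V : normedModType R}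
  (C : set V) (F' : V -> V -> V) (L : R) : Prop :=
  forall x y, C x -> C y -> forall v,
    `|F' x v - F' y v| <= L * `|x - y| * `|v|.

Definition theta_hat {R : realType} (sig th : R) : R :=
  th * (sig / (1 - sig) + th / (1 - sig) ^+ 2).

Definition tau_param {R : realType} (th thh eta L : R) : R :=
  2 * (th - thh) /
  (2 * th + eta * L / 2 +
     Num.sqrt ((2 * th + eta * L / 2) ^+ 2 - 4 * th * (th - thh))).

(* Main.v *)
Require Import Defs.
From mathcomp Require Import all_boot all_order all_algebra.
From mathcomp Require Import all_classical all_reals all_analysis.
From mathcomp Require Import ring lra.
Import Order.TTheory GRing.Theory Num.Theory.
Import numFieldNormedType.Exports.
Local Open Scope classical_set_scope.
Local Open Scope ring_scope.
Set Implicit Arguments. Unset Strict Implicit.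
Section IP.
Variables (R : realType) (V : normedModType R) (ip : V -> V -> R).
Hypothesis hip : is_inner_product ip.

Lemma ip_sym x y : ip x y = ip y x. Proof. by case: hip. Qed.
Lemma ip_lin a x y z : ip (a *: x + y) z = a * ip x z + ip y z. Proof. by case: hip. Qed.
Lemma ip_nn x : ip x x = `|x| ^+ 2. Proof. by case: hip. Qed.
Lemma ip0l z : ip 0 z = 0.
Proof. have := ip_lin 1 0 0 z. rewrite scale1r addr0 mul1r => h. by apply: (addrI (ip 0 z)); rewrite addr0 -h. Qed.
Lemma ipDl x y z : ip (x + y) z = ip x z + ip y z.
Proof. by rewrite -[x]scale1r ip_lin mul1r scale1r. Qed.
Lemma ipZl a x z : ip (a *: x) z = a * ip x z.
Proof. by rewrite -[a *: x]addr0 ip_lin ip0l addr0. Qed.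
Lemma ipNl x z : ip (- x) z = - ip x z.
Proof. by rewrite -scaleN1r ipZl mulN1r. Qed.
Lemma ipBl x y z : ip (x - y) z = ip x z - ip y z.
Proof. by rewrite ipDl ipNl. Qed.
Lemma ip0r z : ip z 0 = 0. Proof. by rewrite ip_sym ip0l. Qed.
Lemma ipDr x y z : ip z (x + y) = ip z x + ip z y.
Proof. by rewrite ip_sym ipDl !(ip_sym z). Qed.
Lemma ipZr a x z : ip z (a *: x) = a * ip z x.
Proof. by rewrite ip_sym ipZl ip_sym. Qed.
Lemma ipNr x z : ip z (- x) = - ip z x.
Proof. by rewrite ip_sym ipNl ip_sym. Qed.
Lemma ipBr x y z : ip z (x - y) = ip z x - ip z y.
Proof. by rewrite ipDr ipNr. Qed.

Lemma ip_cs u w : ip u w <= `|u| * `|w|.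
Proof.
have h1 : `|u + w| ^+ 2 = `|u| ^+ 2 + 2 * ip u w + `|w| ^+ 2.
  by rewrite -!ip_nn ipDl !ipDr (ip_sym w u); ring.
have h2 : `|u - w| ^+ 2 = `|u| ^+ 2 - 2 * ip u w + `|w| ^+ 2.
  by rewrite -!ip_nn ipBl !ipBr (ip_sym w u); ring.
have t1 : `|u + w| <= `|u| + `|w| := ler_normD u w.
have t2 : `| `|u| - `|w| | <= `|u - w| := ler_dist_dist u w.
have n1 : 0 <= `|u + w| := normr_ge0 _.
have n2 : 0 <= `|u - w| := normr_ge0 _.
have nu : 0 <= `|u| := normr_ge0 _.
have nw : 0 <= `|w| := normr_ge0 _.
have t3 : `| `|u| - `|w| | ^+ 2 = (`|u| - `|w|) ^+ 2 by rewrite real_normK // num_real.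
have t5 : 0 <= `| `|u| - `|w| | := normr_ge0 _.
nra.
Qed.

Lemma ip_cs_abs u w : `|ip u w| <= `|u| * `|w|.
Proof.
rewrite ler_norml ip_cs andbT lerNl -ipNl.
by have := ip_cs (- u) w; rewrite normrN.
Qed.
Lemma ip_ext u v : (forall z, ip u z = ip v z) -> u = v.
Proof.
move=> h; apply/eqP; rewrite -subr_eq0 -normr_eq0 -sqrf_eq0 -ip_nn ipBl h subrr //.
Qed.
End IP.
Lemma cont_ind (R : realType) (phi phi' : R -> R) :
 (forall t, 0 <= t -> t <= 1 -> phi' t <= 0) ->
 (forall t, 0 <= t -> t <= 1 -> forall e, 0 < e -> exists2 d, 0 < d &
    forall s, 0 <= s -> s <= 1 -> `|s - t| < d ->
      `|phi s - phi t - phi' t * (s - t)| <= e * `|s - t|) ->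
 phi 1 <= phi 0.
Proof.
move=> hneg hder; apply/ler_addgt0Pr => e e0.
pose S := [set t : R | 0 <= t <= 1 /\ forall u, 0 <= u -> u <= t -> phi u <= phi 0 + e * u].
have S0 : S 0.
  split; first by rewrite lexx ler01.
  move=> u u0 u1; have -> : u = 0 by apply/eqP; rewrite eq_le u0 u1.
  by rewrite mulr0 addr0.
have hS : has_sup S.
  split; first by exists 0.
  by exists 1 => t [/andP[_ ]].
set s := sup S.
have ub := sup_upper_bound hS.
have s0 : 0 <= s by apply: ub.
have s1 : s <= 1 by apply: ge_sup; [exists 0 | move=> t [/andP[]]].
have [d d0 hd] := hder s s0 s1 e e0.
have hps := hneg s s0 s1.
have Ss : S s.
  split; first by rewrite s0 s1.
  move=> u u0 us.
  have [ltus|geus] := ltP u s.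
    have su : 0 < s - u by rewrite subr_gt0.
    have [t [/andP[t0 t1] St] ht] := sup_adherent su hS.
    apply: St => //; rewrite -/s in ht; lra.
  have -> : u = s by apply/eqP; rewrite eq_le us geus.
  have [t [/andP[t0 t1] St] ht] := sup_adherent d0 hS; rewrite -/s in ht.
  have ts : t <= s by apply: ub; split; [rewrite t0 t1|].
  have := hd t t0 t1; rewrite distrC ger0_norm ?subr_ge0 // => /(_ ltac:(lra)).
  rewrite ler_norml => /andP[h1 h2].
  have := St t t0 (lexx t); nra.
have s_eq1 : s = 1.
  apply/eqP; rewrite eq_le s1 /=; apply/negP => /negP; rewrite -ltNge => ls1.
  pose s' := Num.min 1 (s + d / 2).
  have hs'1 : s' <= 1 by rewrite /s' ge_min lexx.
  have hs'2 : s' <= s + d / 2 by rewrite /s' ge_min lexx orbT.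
  have hs'3 : s < s' by rewrite /s' lt_min ls1 /=; lra.
  have : S s'.
    split; first by apply/andP; split; lra.
    move=> u u0 us'.
    have [lus|gus] := leP u s; first by case: Ss => _ /(_ u u0 lus).
    have := hd u u0 ltac:(lra); rewrite ger0_norm ?subr_ge0 ?(ltW gus) // => /(_ ltac:(lra)).
    rewrite ler_norml => /andP[h1 h2].
    have := proj2 Ss s s0 (lexx s); nra.
  move=> /ub; rewrite -/s; lra.
by case: Ss => _ /(_ 1 ler01); rewrite s_eq1 lexx mulr1 => /(_ isT).
Qed.
Lemma conv_seg (R : realType) (V : normedModType R) (C : set V) (a b : V) (t : R) :
  convex_set C -> C a -> C b -> 0 <= t -> t <= 1 -> C (a + t *: (b - a)).
Proof.
move=> cC Ca Cb t0 t1.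
have := cC b a (Itv01 t0 t1).
rewrite !inE => /(_ Cb Ca).
congr C.
rewrite /conv /=.
by rewrite /unstable.onem scalerBl scale1r scalerBr; rewrite addrCA. Qed.

Section Anal.
Variables (R : realType) (V : normedModType R) (ip : V -> V -> R).
Variables (C : set V) (F : V -> V) (F' : V -> V -> V) (L : R).
Hypothesis hip : is_inner_product ip.
Hypothesis cC : convex_set C.
Hypothesis hF : frechet_deriv_on C F F'.
Hypothesis hL : deriv_lipschitz_on C F' L.
Hypothesis L0 : 0 < L.

Lemma F'0 x : C x -> F' x 0 = 0.
Proof.
move=> Cx; have [lin _ _] := hF Cx.
have := lin 1 0 0; rewrite !scale1r addr0 => h.
by apply: (addrI (F' x 0)); rewrite addr0 -h.
Qed.

Lemma F'Z x a u : C x -> F' x (a *: u) = a *: F' x u.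
Proof.
move=> Cx; have [lin _ _] := hF Cx.
by rewrite -[a *: u]addr0 lin F'0 // addr0.
Qed.

Lemma taylor y y' : C y -> C y' ->
  `|F y' - F y - F' y (y' - y)| <= L / 2 * `|y' - y| ^+ 2.
Proof.
move=> Cy Cy'.
set d := y' - y.
set q := F y' - F y - F' y d.
pose z t := y + t *: d.
pose G t := F (z t) - F y - t *: F' y d.
pose K := L / 2 * `|d| ^+ 2 * `|q|.
pose phi t := ip (G t) q - K * t ^+ 2.
pose phi' t := ip (F' (z t) d - F' y d) q - L * t * `|d| ^+ 2 * `|q|.
have Cz t : 0 <= t -> t <= 1 -> C (z t) by move=> t0 t1; apply: conv_seg.
have nd : 0 <= `|d| := normr_ge0 _.
have nq : 0 <= `|q| := normr_ge0 _.
have K0 : 0 <= K by rewrite /K; apply: mulr_ge0 => //; apply: mulr_ge0; [apply: divr_ge0 => //; exact: ltW| exact: exprn_ge0].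
have zmz s t : z s - z t = (s - t) *: d.
  by rewrite /z scalerBl opprD addrACA subrr add0r.
have hneg : forall t, 0 <= t -> t <= 1 -> phi' t <= 0.
  move=> t t0 t1; rewrite /phi' subr_le0.
  apply: le_trans; first exact: (ip_cs hip).
  have := hL (Cz t t0 t1) Cy d.
  have -> : z t - y = t *: d by rewrite /z addrAC subrr add0r.
  rewrite normrZ ger0_norm // => h.
  have : `|F' (z t) d - F' y d| * `|q| <= L * (t * `|d|) * `|d| * `|q| by apply: ler_wpM2r.
  move=> h2; apply: le_trans; first exact: h2; rewrite expr2 -!mulrA.
  by [].
have hder : forall t, 0 <= t -> t <= 1 -> forall e, 0 < e -> exists2 dl, 0 < dl &
    forall s, 0 <= s -> s <= 1 -> `|s - t| < dl ->
      `|phi s - phi t - phi' t * (s - t)| <= e * `|s - t|.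
  move=> t t0 t1 e e0.
  have [_ _ fr] := hF (Cz t t0 t1).
  have dq0 : 0 <= `|d| * `|q| := mulr_ge0 nd nq.
  have P0 : 0 < 2 * (`|d| * `|q| + 1) by lra.
  have e1p : 0 < e / (2 * (`|d| * `|q| + 1)) by apply: divr_gt0.
  have [dl1 dl10 hdl1] := fr _ e1p.
  set e1 := e / (2 * (`|d| * `|q| + 1)) in e1p hdl1.
  have he1 : e1 * (`|d| * `|q|) <= e / 2.
    rewrite /e1 mulrAC ler_pdivrMr //.
    nra.
  have d1p : 0 < dl1 / (`|d| + 1) by apply: divr_gt0 => //; lra.
  have d2p : 0 < e / (2 * (K + 1)) by apply: divr_gt0 => //; lra.
  exists (Num.min (dl1 / (`|d| + 1)) (e / (2 * (K + 1)))); first by rewrite lt_min d1p d2p.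
  move=> s s0 s1; rewrite lt_min => /andP[hs1 hs2].
  have hs1' : `|s - t| * `|d| < dl1.
    move: hs1; rewrite ltr_pdivlMr; last by lra.
    have : 0 <= `|s - t| := normr_ge0 _.
    nra.
  have hs2' : K * `|s - t| <= e / 2.
    move: hs2; rewrite ltr_pdivlMr; last by lra.
    have : 0 <= `|s - t| := normr_ge0 _.
    nra.
  have := hdl1 (z s) (Cz s s0 s1).
  rewrite zmz normrZ => /(_ hs1').
  set r := F (z s) - F (z t) - F' (z t) ((s - t) *: d) => hr.
  have eq : phi s - phi t - phi' t * (s - t) = ip r q - K * (s - t) ^+ 2.
    rewrite /phi /phi' /r /G /K F'Z; last exact: Cz.
    rewrite !(ipBl hip, ipZl hip, ipDl hip, ipNl hip).
    by field.
  rewrite eq.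
  have hsq : (s - t) ^+ 2 = `|s - t| ^+ 2 by rewrite real_normK // num_real.
  rewrite hsq.
  apply: le_trans; first exact: ler_normB.
  have c1 := ip_cs_abs hip r q.
  have : `|K * `|s - t| ^+ 2| = K * `|s - t| ^+ 2.
    by rewrite ger0_norm //; apply: mulr_ge0 => //; exact: exprn_ge0.
  move=> ->.
  have ns : 0 <= `|s - t| := normr_ge0 _.
  have : `|r| * `|q| <= e1 * (`|s - t| * `|d|) * `|q| by apply: ler_wpM2r.
  nra.
have := cont_ind hneg hder.
rewrite /phi /G.
have -> : z 1 = y' by rewrite /z scale1r /d addrC subrK.
have -> : z 0 = y by rewrite /z scale0r addr0.
rewrite -/q scale0r subr0 subrr ip0l // expr1n expr0n /= mulr1 mulr0 subr0.
rewrite scale1r -/q (ip_nn hip) /K => h.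
have M0 : 0 <= L / 2 * `|d| ^+ 2 by apply: mulr_ge0; [apply: divr_ge0 => //; exact: ltW | exact: exprn_ge0].
move: nq; rewrite le_eqVlt => /orP[/eqP <- // | qp].
nra.
Qed.

Hypothesis hmono : monotone_on ip C F.

Lemma F'mono y y' : C y -> C y' -> 0 <= ip (F' y (y' - y)) (y' - y).
Proof.
move=> Cy Cy'.
set w := y' - y.
set P := ip (F' y w) w.
apply/ler_addgt0Pr => e e0; idtac.
have nw : 0 <= `|w| := normr_ge0 _.
have w20 : 0 <= `|w| ^+ 2 := exprn_ge0 _ nw.
have [_ _ fr] := hF Cy.
have epsp : 0 < e / (`|w| ^+ 2 + 1) by apply: divr_gt0 => //; lra.
have [dl dl0 hdl] := fr _ epsp.
set eps := e / (`|w| ^+ 2 + 1) in epsp hdl.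
have heps : eps * `|w| ^+ 2 <= e.
  rewrite /eps mulrAC ler_pdivrMr; last lra.
  nra.
pose t := Num.min 1 (dl / (`|w| + 1)).
have t1 : t <= 1 by rewrite /t ge_min lexx.
have t2 : t <= dl / (`|w| + 1) by rewrite /t ge_min lexx orbT.
have tp : 0 < t by rewrite /t lt_min ltr01 /=; apply: divr_gt0 => //; lra.
have twd : t * `|w| < dl.
  move: t2; rewrite ler_pdivlMr; last lra.
  nra.
pose z := y + t *: w.
have Cz : C z by apply: conv_seg => //; exact: ltW.
have zy : z - y = t *: w by rewrite /z addrAC subrr add0r.
have := hdl z Cz; rewrite zy normrZ ger0_norm ?(ltW tp) // => /(_ twd).
set r := F z - F y - F' y (t *: w) => hr.
have := hmono Cz Cy.
have -> : F z - F y = r + t *: F' y w by rewrite /r F'Z // subrK.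
rewrite zy (ipDl hip) (ipZl hip) !(ipZr hip) -/P => hm.
have c1 := ip_cs hip r w.
have c2 : `|r| * `|w| <= eps * (t * `|w|) * `|w| by apply: ler_wpM2r.
have : 0 <= t * t * (P + eps * `|w| ^+ 2) by nra.
rewrite pmulr_rge0; last exact: mulr_gt0.
lra.
Qed.
End Anal.

Lemma num_thh (R : realType) (sig th : R) : 0 <= sig -> sig < 1/2 -> 0 < th ->
  th < (1 - sig) * (1 - 2 * sig) ->
  [/\ theta_hat sig th * (1 - sig) ^+ 2 = th * (sig * (1 - sig) + th),
      0 <= theta_hat sig th & theta_hat sig th < th].
Proof.
move=> s0 s1 t0 t1.
have m0 : 0 < 1 - sig by lra.
have E : theta_hat sig th * (1 - sig) ^+ 2 = th * (sig * (1 - sig) + th).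
  rewrite /theta_hat; field; lra.
have m2 : 0 < (1 - sig) ^+ 2 by apply: exprn_gt0.
split => //.
  rewrite -(pmulr_lge0 _ m2) E; apply: mulr_ge0; [lra|]; nra.
rewrite -(ltr_pM2r m2) E; nra.
Qed.

Lemma num_tau (R : realType) (th thh eta L : R) : 0 <= thh -> thh < th -> 0 < th ->
  0 < eta -> 0 < L ->
  [/\ 0 < tau_param th thh eta L, tau_param th thh eta L < 1 &
     th * (1 - tau_param th thh eta L) ^+ 2 = thh + tau_param th thh eta L * (eta * L / 2)].
Proof.
move=> h0 h1 t0 e0 L0.
rewrite /tau_param.
set h := eta * L / 2.
have hp : 0 < h by apply: divr_gt0 => //; exact: mulr_gt0.
set B := 2 * th + h.
set c := th - thh.
set D := B ^+ 2 - 4 * th * c.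
have D0 : 0 <= D by rewrite /D /B /c; nra.
set S := Num.sqrt D.
have S0 : 0 <= S := sqrtr_ge0 _.
have S2 : S ^+ 2 = D by rewrite /S sqr_sqrtr.
have X0 : 0 < B + S by rewrite /B; lra.
split.
- apply: divr_gt0 => //; rewrite /c; lra.
- rewrite ltr_pdivrMr // mul1r /B /c; lra.
have key : th * (B + S - 2 * c) ^+ 2 - thh * (B + S) ^+ 2 - 2 * c * h * (B + S) = 0.
  transitivity (c * (S ^+ 2 - D)); first by rewrite /D /B /c; ring.
  by rewrite S2 subrr mulr0.
apply/eqP; rewrite -subr_eq0; apply/eqP.
rewrite -[RHS](mul0r ((B + S) ^-2)) -key.
rewrite /c; field.
lra.
Qed.

Lemma num_b (R : realType) (sig th W : R) : 0 <= sig -> sig < 1/2 -> 0 < th ->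
  th < (1 - sig) * (1 - 2 * sig) -> 0 <= W -> (1 - sig) * W <= th ->
  sig * W + W ^+ 2 <= theta_hat sig th.
Proof.
move=> s0 s1 t0 t1 W0 hW.
have [E _ _] := num_thh s0 s1 t0 t1.
have m0 : 0 < 1 - sig by lra.
have m2 : 0 < (1 - sig) ^+ 2 by apply: exprn_gt0.
rewrite -(ler_pM2r m2) E.
have -> : (sig * W + W ^+ 2) * (1 - sig) ^+ 2 =
  sig * (1 - sig) * ((1 - sig) * W) + ((1 - sig) * W) ^+ 2 by ring.
have u0 : 0 <= (1 - sig) * W by apply: mulr_ge0; lra.
have sm : 0 <= sig * (1 - sig) by apply: mulr_ge0; lra.
nra.
Qed.

Lemma num_small (R : realType) (th thh eta L tau r A Y N : R) :
  0 < tau -> tau < 1 -> 0 < L -> r * (1 - tau) = 1 -> A <= thh -> 0 <= Y -> Y <= eta ->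
  th * (1 - tau) ^+ 2 = thh + tau * (eta * L / 2) ->
  N <= r ^+ 2 * A + r * (r - 1) * (L / 2) * Y -> N <= th.
Proof.
move=> t0 t1 L0 hr hA Y0 hY key hN.
have r0 : 0 < r.
  have : 0 < r * (1 - tau) by rewrite hr.
  by rewrite pmulr_lgt0 //; lra.
have rm1 : r - 1 = r * tau by rewrite -{1}hr; ring.
have c0 : 0 <= r * (r - 1) * (L / 2).
  rewrite rm1; apply: mulr_ge0; [apply: mulr_ge0; [exact: ltW|]; apply: mulr_ge0; lra|lra].
have E : r ^+ 2 * thh + r * (r - 1) * (L / 2) * eta = th.
  rewrite rm1.
  transitivity (r ^+ 2 * (thh + tau * (eta * L / 2))); first by ring.
  rewrite -key.
  transitivity (th * (r * (1 - tau)) ^+ 2); first by ring.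
  by rewrite hr expr1n mulr1.
have h1 : r ^+ 2 * A <= r ^+ 2 * thh by apply: ler_wpM2l; [exact: sqr_ge0|exact: hA].
have h2 : r * (r - 1) * (L / 2) * Y <= r * (r - 1) * (L / 2) * eta by apply: ler_wpM2l.
lra.
Qed.

Lemma pos3 (R : realType) (a L : R) : 0 < a -> 0 < L -> 0 <= a * L / 2.
Proof. move=> a0 L0; apply: divr_ge0 => //; apply: mulr_ge0; exact: ltW. Qed.

Unset Implicit Arguments.
Set Strict Implicit.

Theorem proposition4p3 (R : realType) (V : completeNormedModType R)
  (ip : V -> V -> R) (C : set V) (F : V -> V) (F' : V -> V -> V)
  (L sig th eta : R)
  (x y nu : nat -> V) (lam : nat -> R) :
  is_inner_product ip ->
  C !=set0 -> closed C -> convex_set C ->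
  monotone_on ip C F ->
  frechet_deriv_on C F F' ->
  0 < L -> deriv_lipschitz_on C F' L ->
  (exists2 z, C z & normal_cone ip C z (- F z)) ->
  0 <= sig -> sig < 1 / 2 ->
  0 < th -> th < (1 - sig) * (1 - 2 * sig) ->
  eta > 2 * theta_hat sig th / L ->
  (* initialization *)
  C (x 0%N) -> y 0%N = x 0%N -> nu 0%N = 0 ->
  0 < lam 1%N -> lam 1%N ^+ 2 * `|F (y 0%N)| <= 2 * th / L ->
  (* standing assumption: the algorithm never stops *)
  (forall k : nat, F (y k) + nu k <> 0) ->
  (* iteration k+1 (k : nat), i.e. iteration k >= 1 of the paper *)
  (forall k : nat,
     if lam k.+1 * L / 2 * `|lam k.+1 *: (F (y k) + nu k) + y k - x k|
          <= theta_hat sig th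
     then y k.+1 = y k /\ nu k.+1 = nu k
     else normal_cone ip C (y k.+1) (nu k.+1) /\
          `|lam k.+1 *: (F (y k) + F' (y k) (y k.+1 - y k) + nu k.+1)
             + y k.+1 - x k| <= sig * `|y k.+1 - y k|) ->
  (forall k : nat,
     let tau := tau_param th (theta_hat sig th) eta L in
     if eta <= lam k.+1 * `|y k.+1 - x k|
     then x k.+1 = x k - (tau * lam k.+1) *: (F (y k.+1) + nu k.+1) /\
          lam k.+2 = (1 - tau) * lam k.+1
     else x k.+1 = x k /\ lam k.+2 = lam k.+1 / (1 - tau)) ->
  forall k : nat,
    lam k.+1 * L / 2 * `|lam k.+1 *: (F (y k) + nu k) + y k - x k| <= th /\
    lam k.+1 * L / 2 * `|lam k.+1 *: (F (y k.+1) + nu k.+1) + y k.+1 - x k|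
      <= theta_hat sig th.
Proof.
move=> hip _ _ cC hmono hF L0 hL _ s0 s1 t0 t1 etagt Cx0 y0 nu0 lam1 hlam1 _ hstep hx.
have [_ thh0 thhlt] := num_thh s0 s1 t0 t1.
set thh := theta_hat sig th in hstep thh0 thhlt etagt hx *.
have eta0 : 0 < eta.
  apply: le_lt_trans etagt; apply: divr_ge0; [apply: mulr_ge0 => //|exact: ltW].
have [tau0 tau1 key] := num_tau thh0 thhlt t0 eta0 L0.
set tau := tau_param th thh eta L in tau0 tau1 key hx.
have L20 : 0 <= L / 2 by apply: divr_ge0 => //; exact: ltW.
have bstep : forall k, 0 < lam k.+1 -> normal_cone ip C (y k) (nu k) ->
    lam k.+1 * L / 2 * `|lam k.+1 *: (F (y k) + nu k) + y k - x k| <= th ->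
    normal_cone ip C (y k.+1) (nu k.+1) /\
    lam k.+1 * L / 2 * `|lam k.+1 *: (F (y k.+1) + nu k.+1) + y k.+1 - x k| <= thh.
  move=> k lp NC ha.
  have := hstep k; case: ifP => [ht [-> ->] | _ [NC' he]]; first by split.
  split => //.
  move: lp NC ha NC' he.
  set lm := lam k.+1; set yy := y k; set y' := y k.+1; set nn := nu k; set nn' := nu k.+1.
  set xx := x k.
  move=> lp [Cy NCy] ha [Cy' NCy'] he.
  set a := lm *: (F yy + nn) + yy - xx in ha.
  set e := lm *: (F yy + F' yy (y' - yy) + nn') + y' - xx in he.
  have nw : `|y' - yy| = `|yy - y'| by rewrite distrC.
  rewrite nw in he.
  set w := yy - y' in nw he.
  have hw : `|w| ^+ 2 <= (`|a| + `|e|) * `|w|.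
    have E : ip a w - ip e w =
        lm * (ip nn w - ip (F' yy (y' - yy)) w - ip nn' w) + ip w w.
      rewrite /a /e /w !(ipDl hip, ipNl hip, ipZl hip); ring.
    have n1 : 0 <= ip nn w.
      have : ip nn w = - ip nn (y' - yy) by rewrite -(ipNr hip) opprB.
      have := NCy y' Cy'; lra.
    have n2 : ip nn' w <= 0 by exact: NCy'.
    have n3 : ip (F' yy (y' - yy)) w <= 0.
      have : ip (F' yy (y' - yy)) w = - ip (F' yy (y' - yy)) (y' - yy).
        by rewrite -(ipNr hip) opprB.
      have := F'mono hip cC hF hmono Cy Cy'; lra.
    have : 0 <= lm * (ip nn w - ip (F' yy (y' - yy)) w - ip nn' w).
      apply: mulr_ge0; [exact: ltW|lra].
    rewrite (ip_nn hip) in E.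
    have c1 := ip_cs_abs hip a w; have c2 := ip_cs_abs hip e w.
    move: c1 c2; rewrite !ler_norml => /andP[_ c1] /andP[c2 _].
    nra.
  have nw0 : 0 <= `|w| := normr_ge0 _.
  have na0 : 0 <= `|a| := normr_ge0 _.
  have hwa : (1 - sig) * `|w| <= `|a|.
    move: nw0; rewrite le_eqVlt => /orP[/eqP <-|wp]; first by rewrite mulr0.
    have : `|w| <= `|a| + `|e|.
      by rewrite -(ler_pM2r wp) -expr2.
    nra.
  set b := lm *: (F y' + nn') + y' - xx.
  have Eb : b = e + lm *: (F y' - F yy - F' yy (y' - yy)).
    apply: (ip_ext hip) => z.
    rewrite /b /e !(ipDl hip, ipNl hip, ipZl hip); ring.
  have hb : `|b| <= sig * `|w| + lm * (L / 2 * `|w| ^+ 2).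
    rewrite Eb; apply: le_trans; first exact: ler_normD.
    rewrite normrZ ger0_norm; last exact: ltW.
    apply: lerD => //; apply: ler_wpM2l; first exact: ltW.
    rewrite -nw; exact: (taylor hip cC hF hL L0 Cy Cy').
  have := num_b s0 s1 t0 t1 (W := lm * L / 2 * `|w|).
  have W0 : 0 <= lm * L / 2 * `|w|.
    by apply: mulr_ge0 => //; exact: pos3.
  move=> /(_ W0).
  have : (1 - sig) * (lm * L / 2 * `|w|) <= th.
    apply: le_trans ha; rewrite mulrCA; apply: ler_wpM2l => //.
    by exact: pos3.
  move=> h1 /(_ h1) h2.
  apply: le_trans h2.
  have h3 : lm * L / 2 * `|b| <= lm * L / 2 * (sig * `|w| + lm * (L / 2 * `|w| ^+ 2)).
    apply: ler_wpM2l => //; exact: pos3.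
  apply: le_trans h3 _.
  rewrite le_eqVlt; apply/orP; left; apply/eqP; ring.
have inv : forall k, [/\ 0 < lam k.+1, normal_cone ip C (y k) (nu k) &
    lam k.+1 * L / 2 * `|lam k.+1 *: (F (y k) + nu k) + y k - x k| <= th].
  elim => [|k [lp NC ha]].
    split => //.
      split; first by rewrite y0.
      by move=> z _; rewrite nu0 (ip0l hip).
    rewrite y0 nu0 addr0 addrK normrZ ger0_norm; last exact: ltW.
    rewrite y0 in hlam1.
    move: hlam1; rewrite ler_pdivlMr // => h.
    lra.
  have [NC' hb] := bstep k lp NC ha.
  have := hx k; rewrite /=.
  case: ifP => [hle [hxe hl] | /negbT hlt [hxe hl]].
    have lp' : 0 < lam k.+2 by rewrite hl; apply: mulr_gt0 => //; lra.
    split => //.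
    have Ea : lam k.+2 *: (F (y k.+1) + nu k.+1) + y k.+1 - x k.+1 =
        lam k.+1 *: (F (y k.+1) + nu k.+1) + y k.+1 - x k.
      apply: (ip_ext hip) => z.
      rewrite hxe hl !(ipDl hip, ipNl hip, ipZl hip); ring.
    rewrite Ea hl.
    have : (1 - tau) * (lam k.+1 * L / 2 * `|lam k.+1 *: (F (y k.+1) + nu k.+1) + y k.+1 - x k|)
        <= (1 - tau) * thh by apply: ler_wpM2l => //; lra.
    have : (1 - tau) * thh <= th by nra.
    move=> h1 h2.
    have -> : (1 - tau) * lam k.+1 * L / 2 *
        `|lam k.+1 *: (F (y k.+1) + nu k.+1) + y k.+1 - x k| =
        (1 - tau) * (lam k.+1 * L / 2 *
        `|lam k.+1 *: (F (y k.+1) + nu k.+1) + y k.+1 - x k|) by ring.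
    lra.
  rewrite -ltNge in hlt.
  set r := (1 - tau)^-1.
  have hr : r * (1 - tau) = 1 by rewrite /r mulVf //; lra.
  have r0 : 0 < r by rewrite /r invr_gt0; lra.
  have r1 : 1 <= r.
    have : r - 1 = r * tau by rewrite -{1}hr; ring.
    have : 0 <= r * tau by apply: mulr_ge0; lra.
    lra.
  have hl' : lam k.+2 = r * lam k.+1 by rewrite hl mulrC.
  have lp' : 0 < lam k.+2 by rewrite hl'; exact: mulr_gt0.
  split => //.
  set b := lam k.+1 *: (F (y k.+1) + nu k.+1) + y k.+1 - x k in hb.
  have Ea : lam k.+2 *: (F (y k.+1) + nu k.+1) + y k.+1 - x k.+1 =
      r *: b + (1 - r) *: (y k.+1 - x k).
    apply: (ip_ext hip) => z.
    rewrite /b hxe hl' !(ipDl hip, ipNl hip, ipZl hip); ring.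
  rewrite Ea.
  have hn : `|r *: b + (1 - r) *: (y k.+1 - x k)| <= r * `|b| + (r - 1) * `|y k.+1 - x k|.
    apply: le_trans; first exact: ler_normD.
    rewrite !normrZ ger0_norm; last exact: ltW.
    rewrite ler0_norm; last lra.
    by rewrite opprB.
  apply: (num_small tau0 tau1 L0 hr hb (Y := lam k.+1 * `|y k.+1 - x k|)).
  - by apply: mulr_ge0; [exact: ltW|].
  - exact: (ltW hlt).
  - exact: key.
  have c0 : 0 <= lam k.+2 * L / 2.
    exact: pos3.
  have := ler_wpM2l c0 hn.
  move=> h; apply: le_trans h _.
  rewrite le_eqVlt; apply/orP; left; apply/eqP; rewrite hl'; ring.
move=> k; have [lp NC ha] := inv k; have [_ hb] := bstep k lp NC ha.
by split.
Qed.
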